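(* Let $n\ge 2$ and let $A$, $B$ be $n$-dimensional boxes with closed side lengths $a_1\le\dots\le a_n$ and $b_1\le\dots\le b_n$. Suppose that $A$, in some state, fits inside $B$ in its closed state, and that $B$, in some state, fits inside $A$ in some state $\sigma$. Then in the state $\sigma$ the box $A$ is expanded along a side of closed length $a_1$ (its smallest side), and the expanded length exceeds all other side lengths of $A$, i.e. the expanded smallest side becomes the largest side of $A$.
   Context: A state of an $n$-dimensional box $A$ with closed side lengths $a_1\le\dots\le a_n$ is either closed or expanded along one side $i$: $a_i$ is replaced by $a_i'$ with $a_i\le a_i'\le 2a_i$, other sides unchanged (only one side can expand). The dimension vector of a state is its multiset of side lengths sorted in non-decreasing order. A box $X$ in some state fits inside a box $Y$ in some state if each coordinate of the dimension vector of $Y$ is strictly larger than the corresponding coordinate of that of $X$. *)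

(* Defs.v *)
From mathcomp Require Import all_boot all_order all_algebra.
Set Implicit Arguments. Unset Strict Implicit. Unset Printing Implicit Defensive.
Import Order.TTheory GRing.Theory Num.Theory.
Local Open Scope ring_scope.

Section Boxes.
Variables (R : realFieldType) (n : nat).

(* A box is given by its closed side lengths a : 'I_n -> R.
   s is a state of the box a: either closed (s = a), or expanded along
   exactly one side i, with a i <= s i <= 2 a i and the other sides unchanged. *)
Definition is_state (a s : 'I_n -> R) : Prop :=
  s = a \/
  exists i : 'I_n, a i <= s i <= 2 * a i /\ (forall j : 'I_n, j != i -> s j = a j).

Definition dimvec (s : 'I_n -> R) : seq R :=
  sort <=%R [seq s i | i <- enum 'I_n].

Definition fits (s t : 'I_n -> R) : Prop :=
  forall k : 'I_n, nth 0 (dimvec s) k < nth 0 (dimvec t) k.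

End Boxes.

(* Main.v *)
Require Import Defs.
From mathcomp Require Import all_boot all_order all_algebra.
Import Order.TTheory GRing.Theory Num.Theory.
Local Open Scope ring_scope.
Set Implicit Arguments. Unset Strict Implicit.

Lemma predlt (n : nat) : (0 < n)%N -> (n.-1 < n)%N.
Proof. by rewrite ltn_predL. Qed.

Section H.
Variables (R : realFieldType) (n : nat).

Lemma dv_size (s : 'I_n -> R) : size (dimvec s) = n.
Proof. by rewrite /dimvec size_sort size_map size_enum_ord. Qed.

Lemma dv_sorted (s : 'I_n -> R) : sorted <=%R (dimvec s).
Proof. apply: sort_sorted; exact: le_total. Qed.

Lemma dv_le (s : 'I_n -> R) (k l : nat) : (k <= l)%N -> (l < n)%N ->
  nth 0 (dimvec s) k <= nth 0 (dimvec s) l.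
Proof.
move=> kl ln; apply: (sorted_leq_nth le_trans (@lexx _ _)) => //;
  first exact: dv_sorted; rewrite inE dv_size //; exact: leq_ltn_trans kl ln.
Qed.

Lemma dv_mem (s : 'I_n -> R) j : s j \in dimvec s.
Proof. by rewrite /dimvec mem_sort; apply: map_f; rewrite mem_enum. Qed.

Lemma dv_min (s : 'I_n -> R) j : nth 0 (dimvec s) 0 <= s j.
Proof.
have := dv_mem s j; rewrite -index_mem dv_size => Hi.
rewrite -(nth_index 0 (dv_mem s j)); exact: dv_le.
Qed.

Lemma dv_max (s : 'I_n -> R) j : s j <= nth 0 (dimvec s) n.-1.
Proof.
have := dv_mem s j; rewrite -index_mem dv_size => Hi.
rewrite -(nth_index 0 (dv_mem s j)); apply: dv_le => //.
  by rewrite -ltnS prednK // (leq_ltn_trans _ Hi).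
by rewrite prednK // (leq_ltn_trans _ Hi).
Qed.

Lemma dv_ex (s : 'I_n -> R) k : (k < n)%N -> exists j, nth 0 (dimvec s) k = s j.
Proof.
move=> kn; have : nth 0 (dimvec s) k \in dimvec s by rewrite mem_nth // dv_size.
rewrite /dimvec mem_sort => /mapP [j _ ->]; by exists j.
Qed.

Lemma st_ge (a s : 'I_n -> R) : is_state a s -> forall j, a j <= s j.
Proof.
case=> [-> j|[i [/andP [h1 _] h2]] j]; first exact: lexx.
case: (eqVneq j i) => [->//|/h2 ->]; exact: lexx.
Qed.

Lemma st_min (a s : 'I_n -> R) : (0 < n)%N -> is_state a s ->
  nth 0 (dimvec a) 0 <= nth 0 (dimvec s) 0.
Proof.
move=> n0 hs; have [j ->] := dv_ex s n0.
exact: le_trans (dv_min a j) (st_ge hs j).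
Qed.

Lemma st_max (a s : 'I_n -> R) : (0 < n)%N -> is_state a s ->
  nth 0 (dimvec a) n.-1 <= nth 0 (dimvec s) n.-1.
Proof.
move=> n0 hs; have [j ->] := dv_ex a (predlt n0).
exact: le_trans (st_ge hs j) (dv_max s j).
Qed.

Lemma fits_min (s t : 'I_n -> R) (n0 : (0 < n)%N) : fits s t ->
  nth 0 (dimvec s) 0 < nth 0 (dimvec t) 0.
Proof. move=> f; exact: (f (Ordinal n0)). Qed.

Lemma fits_max (s t : 'I_n -> R) (n0 : (0 < n)%N) : fits s t ->
  nth 0 (dimvec s) n.-1 < nth 0 (dimvec t) n.-1.
Proof. move=> f; exact: (f (Ordinal (predlt n0))). Qed.

End H.

Theorem lemma8 (R : realFieldType) (n : nat) (hn : (2 <= n)%N)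
  (a b : 'I_n -> R)
  (apos : forall i, 0 < a i) (bpos : forall i, 0 < b i)
  (amono : forall i j : 'I_n, (i <= j)%N -> a i <= a j)
  (bmono : forall i j : 'I_n, (i <= j)%N -> b i <= b j)
  (hAB : exists sA, is_state a sA /\ fits sA b)
  (sigma : 'I_n -> R) (hsigma : is_state a sigma)
  (hBA : exists sB, is_state b sB /\ fits sB sigma) :
  exists i : 'I_n,
    (forall j : 'I_n, a i <= a j) /\
    (forall j : 'I_n, j != i -> sigma j = a j) /\
    (forall j : 'I_n, j != i -> a j < sigma i).
Proof.
have n0 : (0 < n)%N by apply: leq_trans hn.
case: hAB => sA [hsA fA]; case: hBA => sB [hsB fB].
have hmin : nth 0 (dimvec a) 0 < nth 0 (dimvec sigma) 0.
  apply: le_lt_trans (st_min n0 hsA) _.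
  apply: lt_le_trans (fits_min n0 fA) _.
  apply: le_trans (st_min n0 hsB) _.
  apply: ltW; exact: fits_min n0 fB.
have hmax : nth 0 (dimvec a) n.-1 < nth 0 (dimvec sigma) n.-1.
  apply: le_lt_trans (st_max n0 hsA) _.
  apply: lt_le_trans (fits_max n0 fA) _.
  apply: le_trans (st_max n0 hsB) _.
  apply: ltW; exact: fits_max n0 fB.
case: hsigma => [E|[i [_ hi]]]; first by rewrite E ltxx in hmin.
set o0 := Ordinal n0.
have io : i = o0.
  apply/eqP; apply/negPn/negP => ne.
  have := dv_min sigma o0; rewrite hi 1?eq_sym // => h.
  have h2 := lt_le_trans hmin h; have [j hj] := dv_ex a n0.
  have h1 : a o0 <= a j by apply: amono.
  by move: h2; rewrite hj => h2; have := le_lt_trans h1 h2; rewrite ltxx.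
exists i; split; last split => //.
  by move=> j; rewrite io; apply: amono.
move=> j ne.
have [k hk] := dv_ex sigma (predlt n0).
have ki : k = i.
  apply/eqP; apply/negPn/negP => nk.
  move: hmax; rewrite hk hi // => h.
  by have := lt_le_trans h (dv_max a k); rewrite ltxx.
rewrite -ki -hk; exact: le_lt_trans (dv_max a j) hmax.
Qed.
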